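(* Let $d\ge2$. (1) If $y,y_0\in Y_d$ are such that $\tau_{y_0}\in\overline{A_{d+1}\tau_y}$ and $y_0$ is L, then $y$ is L. (2) If $x,x_0\in X_d$ are such that $x_0\in\overline{A_dx}$ and $x_0$ is GL, then $x$ is GL.
   Context: $X_k$ is the space of unimodular lattices in $\mathbb{R}^k$ ($\cong SL_k(\mathbb{R})/SL_k(\mathbb{Z})$, coset of $g$ = lattice spanned by the columns of $g$), with quotient topology. $Y_d$ is the space of grids $x+v$ ($x\in X_d$, $v\in\mathbb{R}^d$). The embedding $\tau:Y_d\to X_{d+1}$ sends the grid $y=\bar g+v$ ($\bar g$ the lattice spanned by columns of $g\in SL_d(\mathbb{R})$) to the lattice $\tau_y=\begin{pmatrix} g& v\\0&1\end{pmatrix}SL_{d+1}(\mathbb{Z})$, i.e. $\tau_y=\{(u+nv,n)^t: u\in\bar g,\ n\in\mathbb{Z}\}$. $A_k$ is the group of positive diagonal $k\times k$ matrices of determinant one. For $w\in\mathbb{R}^d$, $N(w)=\prod_iw_i$; for a grid $y$, $N(y)=\inf\{|N(w)|:w\in y\}$ and $n(x+v)=x+nv$. A grid $y$ is L if $\inf_{n\neq0}|nN(ny)|=0$; a lattice $x\in X_d$ is GL if every grid $x+v$ ($v\in\mathbb{R}^d$) is L. *)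

(* Defs.v *)
From HB Require Import structures.
From mathcomp Require Import all_boot all_order all_algebra.
From mathcomp Require Import all_classical all_reals.
Set Implicit Arguments. Unset Strict Implicit. Unset Printing Implicit Defensive.
Import Order.TTheory GRing.Theory Num.Theory.
Local Open Scope ring_scope.
Local Open Scope classical_set_scope.

Section Defs.
Variable R : realType.

Definition is_integer (x : R) : Prop := exists z : int, x = z%:~R.

Definition inSLR k (g : 'M[R]_k) : Prop := \det g = 1.

Definition inSLZ k (gam : 'M[R]_k) : Prop :=
  (forall i j, is_integer (gam i j)) /\ \det gam = 1.

Definition inA k (D : 'M[R]_k) : Prop :=
  is_diag_mx D /\ (forall i, 0 < D i i) /\ \det D = 1.

Definition intvec k (u : 'cV[R]_k) : Prop := forall i, is_integer (u i 0).

Definition lattice k (g : 'M[R]_k) : set 'cV[R]_k :=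
  [set g *m u | u in intvec (k:=k)].

Definition grid k (g : 'M[R]_k) (v : 'cV[R]_k) : set 'cV[R]_k :=
  [set w + v | w in lattice g].

Definition Nw k (w : 'cV[R]_k) : R := \prod_(i < k) w i 0.

Definition Ngrid k (g : 'M[R]_k) (v : 'cV[R]_k) : R :=
  inf [set `|Nw w| | w in grid g v].

(* n(x+v) = x + n v ; the grid x+v is L iff inf_{n <> 0} |n N(n y)| = 0 *)
Definition isL k (g : 'M[R]_k) (v : 'cV[R]_k) : Prop :=
  inf [set `|n%:~R * Ngrid g (n%:~R *: v)| | n in [set n : int | n != 0]] = 0.

Definition isGL k (g : 'M[R]_k) : Prop := forall v : 'cV[R]_k, isL g v.

Definition tau d (g : 'M[R]_d) (v : 'cV[R]_d) : 'M[R]_(d + 1) :=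
  block_mx g v 0 1.

(* The lattice g0 SL_k(Z) lies in the closure (quotient topology on
   SL_k(R)/SL_k(Z), SL_k(R) with the topology induced from matrix entries)
   of the orbit A_k (g SL_k(Z)).  Since the quotient map is open, this means:
   every neighbourhood of g0 in SL_k(R) meets A_k g SL_k(Z). *)
Definition in_orbit_closure k (g0 g : 'M[R]_k) : Prop :=
  forall eps : R, 0 < eps ->
    exists D gam, inA D /\ inSLZ gam /\
      forall i j, `|(D *m g *m gam) i j - g0 i j| < eps.

End Defs.

(* Main.v *)
Require Import Defs.
From HB Require Import structures.
From mathcomp Require Import all_boot all_order all_algebra.
From mathcomp Require Import all_classical all_reals all_analysis.
From mathcomp Require Import ring lra.
Import Order.TTheory GRing.Theory Num.Theory.
Local Open Scope ring_scope.
Local Open Scope classical_set_scope.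
Set Implicit Arguments. Unset Strict Implicit.

Lemma seq_cluster (R : realType) n (t : nat -> 'rV[R]_n) :
  (forall k i, 0 <= t k 0 i <= 1) ->
  exists ts : 'rV[R]_n, forall r : R, 0 < r -> forall K : nat,
     exists k, (K <= k)%N /\ forall i, `|t k 0 i - ts 0 i| < r.
Proof.
move=> ht.
have hA := @rV_compact R^o n (fun=> `[(0:R), 1]) (fun=> @segment_compact R 0 1).
have FA : (t @ \oo) [set v : 'rV[R]_n | forall i, `[(0:R), 1] (v ord0 i)].
  by exists 0%N => // k _ i /=; rewrite in_itv /= ht.
have [ts [_ hcl]] := hA _ _ FA.
exists ts => r hr K.
have FK : (t @ \oo) (t @` [set k | (K <= k)%N]).
  by exists K => // k /= hk; exists k.
have [y [[k hk <-] hb]] := hcl _ _ FK (nbhsx_ballx ts r hr).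
exists k; split => // i.
move: hb => [_ /(_ ord0 i)].
by rewrite /ball /= distrC.
Qed.

Lemma zmod_aux (V : zmodType) (u A B : V) : u + B = u + A - (A - B).
Proof. by rewrite opprB -addrA; congr (_ + _); rewrite addrC subrK. Qed.

Section Aux.
Variable R : realType.

Lemma is_int_z (z : int) : is_integer (z%:~R : R).
Proof. by exists z. Qed.

Lemma is_intD (a b : R) : is_integer a -> is_integer b -> is_integer (a + b).
Proof. by move=> [x ->] [y ->]; exists (x + y); rewrite intrD. Qed.

Lemma is_intM (a b : R) : is_integer a -> is_integer b -> is_integer (a * b).
Proof. by move=> [x ->] [y ->]; exists (x * y); rewrite intrM. Qed.

Lemma is_intN (a : R) : is_integer a -> is_integer (- a).
Proof. by move=> [x ->]; exists (- x); rewrite mulrNz. Qed.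

Lemma is_int0 : is_integer (0 : R).
Proof. by exists 0. Qed.

Lemma intvec_mul k l (A : 'M[R]_(k, l)) u :
  (forall i j, is_integer (A i j)) -> intvec u -> intvec (A *m u).
Proof.
move=> hA hu i; rewrite mxE.
apply: (big_ind (fun x => is_integer x)) => //.
- exact: is_int0.
- exact: is_intD.
- by move=> j _; apply: is_intM.
Qed.

Lemma intvecD k (u w : 'cV[R]_k) : intvec u -> intvec w -> intvec (u + w).
Proof. by move=> hu hw i; rewrite mxE; apply: is_intD. Qed.

Lemma intvecN k (u : 'cV[R]_k) : intvec u -> intvec (- u).
Proof. by move=> hu i; rewrite mxE; apply: is_intN. Qed.

Lemma intvecZ k (z : int) (u : 'cV[R]_k) : intvec u -> intvec (z%:~R *: u).
Proof. by move=> hu i; rewrite mxE; apply: is_intM => //; apply: is_int_z. Qed.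

Lemma inf0_small (S : set R) : S !=set0 -> (forall x : R, S x -> 0 <= x) ->
  inf S = 0 -> forall e : R, 0 < e -> exists2 x, S x & x < e.
Proof.
move=> hne hpos h0 e he.
have hinf : has_inf S by split => //; exists 0 => x /hpos.
have [x Sx lt] := inf_adherent he hinf.
by exists x => //; rewrite h0 add0r in lt.
Qed.

Lemma small_inf0 (S : set R) : (forall x : R, S x -> 0 <= x) ->
  (forall e : R, 0 < e -> exists2 x, S x & x < e) -> inf S = 0.
Proof.
move=> hpos hs.
have hne : S !=set0 by have [x Sx _] := hs 1 ltr01; exists x.
have hlb : has_lbound S by exists 0 => x /hpos.
have h1 : 0 <= inf S by apply: lb_le_inf => // x /hpos.
apply/eqP; rewrite eq_le h1 andbT.
rewrite leNgt; apply/negP => he.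
have [x Sx xe] := hs _ he.
by move: (ge_inf hlb Sx); rewrite leNgt xe.
Qed.


Lemma intvec0 k : intvec (0 : 'cV[R]_k).
Proof. by move=> i; rewrite mxE; exact: is_int0. Qed.

Lemma grid_mem k (g : 'M[R]_k) v u : intvec u -> grid g v (g *m u + v).
Proof. by move=> hu; exists (g *m u) => //; exists u. Qed.

Lemma Ngrid_ge0 k (g : 'M[R]_k) v : 0 <= Ngrid g v.
Proof.
apply: lb_le_inf; first by exists `|Nw (g *m 0 + v)|; exists (g *m 0 + v) => //; apply: grid_mem; apply: intvec0.
by move=> x [w _ <-].
Qed.

Lemma Ngrid_le k (g : 'M[R]_k) v u : intvec u -> Ngrid g v <= `|Nw (g *m u + v)|.
Proof.
move=> hu; apply: ge_inf; last by exists (g *m u + v) => //; apply: grid_mem.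
by exists 0 => x [w _ <-].
Qed.

Lemma isL_small k (g : 'M[R]_k) v : isL g v -> forall e : R, 0 < e ->
  exists n : int, n != 0 /\ exists u, intvec u /\
     `|n%:~R * Nw (g *m u + n%:~R *: v)| < e.
Proof.
move=> hL e he.
have hne : [set `|n%:~R * Ngrid g (n%:~R *: v)| | n in [set n : int | n != 0]] !=set0.
  by exists `|1%:~R * Ngrid g (1%:~R *: v)|; exists 1.
have hpos : forall x : R, [set `|n%:~R * Ngrid g (n%:~R *: v)| | n in [set n : int | n != 0]] x -> 0 <= x.
  by move=> x [n _ <-]; exact: normr_ge0.
have [x [n n0 <-] xe] := @inf0_small _ hne hpos hL _ he.
exists n; split => //.
pose T : set R := [set `|Nw w| | w in grid g (n%:~R *: v)].
have hn : (0 : R) < `|n%:~R : R| by rewrite normr_gt0 intr_eq0.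
set eps := (e - `|n%:~R * Ngrid g (n%:~R *: v)|) / `|n%:~R : R|.
have heps : 0 < eps by apply: divr_gt0 => //; rewrite subr_gt0.
have hinf : has_inf T.
  split; first by exists `|Nw (g *m 0 + n%:~R *: v)|; exists (g *m 0 + n%:~R *: v) => //; apply: grid_mem; apply: intvec0.
  by exists 0 => y [w _ <-].
have [y [w [w' [u hu <-] <-] <-] lty] := inf_adherent heps hinf.
exists u; split => //.
rewrite normrM.
rewrite -(ltr_pM2l hn) in lty.
apply: (lt_le_trans lty).
rewrite /eps mulrDr mulrCA divff ?mulr1; last by rewrite gt_eqF.
rewrite normrM (ger0_norm (Ngrid_ge0 _ _)).
have -> : inf T = Ngrid g (n%:~R *: v) by [].
by rewrite addrCA subrr addr0.
Qed.

Lemma small_isL k (g : 'M[R]_k) v : (forall e : R, 0 < e ->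
  exists n : int, n != 0 /\ exists u, intvec u /\
     `|n%:~R * Nw (g *m u + n%:~R *: v)| < e) -> isL g v.
Proof.
move=> hs; apply: small_inf0; first by move=> x [n _ <-]; exact: normr_ge0.
move=> e he; have [n [n0 [u [hu lt]]]] := hs e he.
exists `|n%:~R * Ngrid g (n%:~R *: v)|; first by exists n.
apply: le_lt_trans lt.
rewrite !normrM ler_wpM2l // (ger0_norm (Ngrid_ge0 _ _)).
exact: Ngrid_le.
Qed.


Lemma prod_cont (I : Type) (s : seq I) (f : I -> R) (dl : R) : 0 < dl ->
  exists2 eta : R, 0 < eta & forall h : I -> R, (forall i, `|h i - f i| < eta) ->
    `|\prod_(i <- s) h i - \prod_(i <- s) f i| < dl.
Proof.
elim: s dl => [|a s IH] dl hdl.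
  by exists 1 => // h _; rewrite !big_nil subrr normr0.
set fa := `|f a|.
have hfa : 0 <= fa by exact: normr_ge0.
pose d' := Num.min 1 (dl / (2 * (fa + 1))).
have hd' : 0 < d' by rewrite lt_min ltr01 /= divr_gt0 // mulr_gt0 // ltr_wpDl.
have [e' he' H'] := IH d' hd'.
set P := \prod_(i <- s) f i.
have hP : 0 <= `|P| by exact: normr_ge0.
exists (Num.min e' (dl / (2 * (`|P| + 1)))).
  by rewrite lt_min he' /= divr_gt0 // mulr_gt0 // ltr_wpDl.
move=> h hh.
have hh' : forall i, `|h i - f i| < e' by move=> i; have := hh i; rewrite lt_min => /andP[].
have := H' h hh'; rewrite -/P; set Q := \prod_(i <- s) h i => hQP.
rewrite !big_cons -/P -/Q.
have hQ : `|Q| <= `|P| + 1.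
  have : `|Q - P| < 1 by apply: lt_le_trans hQP _; rewrite ge_min lexx.
  move=> lt1; have := ler_normD (Q - P) P; rewrite subrK => hle.
  by apply: le_trans hle _; rewrite addrC lerD2l ltW.
have ha : `|h a - f a| <= dl / (2 * (`|P| + 1)).
  by have := hh a; rewrite lt_min => /andP[_ /ltW].
have eq1 : h a * Q - f a * P = (h a - f a) * Q + f a * (Q - P).
  by rewrite mulrBl mulrBr addrA subrK.
rewrite eq1.
apply: le_lt_trans (ler_normD _ _) _.
rewrite !normrM.
have t1 : `|h a - f a| * `|Q| <= dl / 2.
  apply: le_trans (ler_pM (normr_ge0 _) (normr_ge0 _) ha hQ) _.
  have hP1 : `|P| + 1 != 0 by rewrite gt_eqF // ltr_wpDl.
  have -> : dl / (2 * (`|P| + 1)) * (`|P| + 1) = dl / 2 by field; rewrite hP1.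
  by [].
have t2 : fa * `|Q - P| < dl / 2.
  have hd'2 : d' <= dl / (2 * (fa + 1)) by rewrite ge_min lexx orbT.
  have hQP' : `|Q - P| < dl / (2 * (fa + 1)) by apply: lt_le_trans hQP hd'2.
  apply: (@le_lt_trans _ _ (fa * (dl / (2 * (fa + 1))))).
    by apply: ler_wpM2l => //; apply: ltW.
  have hf1 : fa + 1 != 0 by rewrite gt_eqF // ltr_wpDl.
  have -> : fa * (dl / (2 * (fa + 1))) = dl / 2 * (fa / (fa + 1)) by field; rewrite hf1.
  rewrite gtr_pMr ?divr_gt0 // ltr_pdivrMr ?ltr_wpDl // mul1r.
  by rewrite ltrDl.
rewrite -/fa.
by rewrite [dl]splitr; apply: ler_ltD.
Qed.


Lemma Nw_cont k (x : 'cV[R]_k) (dl : R) : 0 < dl ->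
  exists2 eta : R, 0 < eta & forall y : 'cV[R]_k,
    (forall i, `|y i 0 - x i 0| < eta) -> `|Nw y - Nw x| < dl.
Proof.
move=> hdl; have [eta he H] := @prod_cont _ (index_enum 'I_k) (fun i => x i 0) _ hdl.
by exists eta => // y hy; apply: (H (fun i => y i 0)).
Qed.

Lemma diag_entry k (D : 'M[R]_k) (x : 'cV[R]_k) i :
  is_diag_mx D -> (D *m x) i 0 = D i i * x i 0.
Proof.
move=> /diag_mxP [dd ->]; rewrite mul_diag_mx !mxE eqxx mulr1n.
by [].
Qed.

Lemma NwD k (D : 'M[R]_k) x : inA D -> Nw (D *m x) = Nw x.
Proof.
move=> [hd [_ hdet]]; rewrite /Nw.
under eq_bigr => i _ do rewrite diag_entry //.
rewrite big_split /=.
move: hdet hd => + /diag_mxP [dd Ddd]; rewrite Ddd det_diag => hdet.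
have -> : \prod_(i < k) diag_mx dd i i = 1.
  by apply: etrans hdet; apply: eq_bigr => i _; rewrite !mxE eqxx mulr1n.
by rewrite mul1r.
Qed.

Lemma Nw_col k (a : 'cV[R]_k) (b : 'cV[R]_1) :
  Nw (col_mx a b) = Nw a * b 0 0.
Proof.
rewrite /Nw big_split_ord /= big_ord1.
congr (_ * _); first by apply: eq_bigr => i _; rewrite col_mxEu.
by rewrite col_mxEd.
Qed.

Lemma tau_mul d (g : 'M[R]_d) v (z : 'cV[R]_(d + 1)) :
  tau g v *m z = col_mx (g *m usubmx z + (dsubmx z 0 0) *: v) (dsubmx z).
Proof.
rewrite /tau -{1}[z]vsubmxK mul_block_col mul0mx mul1mx add0r.
congr col_mx; congr (_ + _); rewrite {1}[dsubmx z]mx11_scalar; exact: mul_mx_scalar.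
Qed.

Lemma Nw_tau d (g : 'M[R]_d) v (z : 'cV[R]_(d + 1)) :
  Nw (tau g v *m z) = Nw (g *m usubmx z + (dsubmx z 0 0) *: v) * dsubmx z 0 0.
Proof. by rewrite tau_mul Nw_col. Qed.

Lemma intvec_col d (u : 'cV[R]_d) (c : int) : intvec u ->
  intvec (col_mx u (scalar_mx (c%:~R) : 'cV[R]_1)).
Proof.
move=> hu i; rewrite mxE; case: splitP => j _; first exact: hu.
by rewrite mxE ord1 eqxx mulr1n; exact: is_int_z.
Qed.

Lemma mul_close m k (A B : 'M[R]_(m, k)) (z : 'cV[R]_k) (eps : R) :
  (forall i j, `|A i j - B i j| < eps) -> forall i,
  `|(A *m z) i 0 - (B *m z) i 0| <= eps * \sum_j `|z j 0|.
Proof.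
move=> h i; rewrite !mxE -sumrB mulr_sumr.
apply: le_trans (ler_norm_sum _ _ _) _.
apply: ler_sum => j _; rewrite -mulrBl normrM ler_wpM2r //.
exact: ltW.
Qed.


Lemma norm_int_ge1 (n : int) : n != 0 -> 1 <= `|n%:~R : R|.
Proof. by move=> n0; rewrite norm_intr_ge1 ?intr_eq0 // ?intr_int. Qed.

Lemma part1 d (g g0 : 'M[R]_d) v v0 :
  in_orbit_closure (tau g0 v0) (tau g v) -> isL g0 v0 -> isL g v.
Proof.
move=> hc hL0; apply: small_isL => e he.
have he2 : 0 < e / 2 by rewrite divr_gt0.
have [n0 [n00 [u0 [hu0 lt0]]]] := isL_small hL0 he2.
pose z := col_mx u0 (scalar_mx (n0%:~R) : 'cV[R]_1).
pose X := tau g0 v0 *m z.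
have hX : Nw X = Nw (g0 *m u0 + n0%:~R *: v0) * n0%:~R.
  by rewrite /X Nw_tau /z col_mxKu col_mxKd mxE eqxx mulr1n.
have [eta heta hcont] := Nw_cont X he2.
pose eta1 := Num.min eta (1/2).
have heta1 : 0 < eta1 by rewrite lt_min heta /= divr_gt0.
pose S := \sum_j `|z j 0|.
have hS : 0 <= S by apply: sumr_ge0 => j _; exact: normr_ge0.
pose eps := eta1 / (1 + S).
have hS1 : 0 < 1 + S by rewrite ltr_pwDl.
have heps : 0 < eps by rewrite divr_gt0.
have [D [gam [hD [hgam hclose]]]] := hc eps heps.
pose Y := (D *m tau g v *m gam) *m z.
have hYX : forall i, `|Y i 0 - X i 0| < eta1.
  move=> i; apply: le_lt_trans (mul_close z hclose i) _.
  rewrite /eps mulrAC ltr_pdivrMr // ltr_pM2l //.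
  by rewrite ltrDr.
pose z' := gam *m z.
have hz' : intvec z' := intvec_mul hgam.1 (intvec_col n0 hu0).
have hY : Y = D *m (tau g v *m z') by rewrite /Y /z' !mulmxA.
have [m hm] : is_integer (dsubmx z' 0 0) by rewrite mxE; apply: hz'.
have hNY : Nw Y = Nw (g *m usubmx z' + m%:~R *: v) * m%:~R.
  by rewrite hY NwD // Nw_tau hm.
have hlast : Y (rshift d 0) 0 = D (rshift d 0) (rshift d 0) * m%:~R.
  rewrite hY diag_entry; last exact: hD.1.
  by rewrite tau_mul col_mxEd hm.
have hXlast : X (rshift d 0) 0 = n0%:~R.
  by rewrite /X tau_mul col_mxEd /z col_mxKd mxE eqxx mulr1n.
have m0 : m != 0.
  apply/negP => /eqP m0; move: (hYX (rshift d 0)).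
  rewrite hlast hXlast m0 mulr0 sub0r normrN => hlt.
  have h1 := norm_int_ge1 n00.
  have : eta1 <= 1/2 by rewrite ge_min lexx orbT.
  move=> hle; have := lt_le_trans hlt hle; lra.
exists m; split => //; exists (usubmx z'); split.
  by move=> i; rewrite mxE; apply: hz'.
have hyc : forall i, `|Y i 0 - X i 0| < eta.
  by move=> i; apply: lt_le_trans (hYX i) _; rewrite ge_min lexx.
have := hcont Y hyc; rewrite hNY hX => hc2.
rewrite mulrC.
set A := Nw (g *m usubmx z' + m%:~R *: v) * m%:~R in hc2 *.
set B := Nw (g0 *m u0 + n0%:~R *: v0) * n0%:~R in hc2.
have hB : `|B| < e / 2 by rewrite /B mulrC.
have := ler_normD (A - B) B; rewrite subrK => hA.
apply: le_lt_trans hA _.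
by rewrite [e]splitr ltrD.
Qed.


Lemma mxE_add m n (A B : 'M[R]_(m,n)) i j : (A + B) i j = A i j + B i j.
Proof. by rewrite mxE. Qed.
Lemma mxE_opp m n (A : 'M[R]_(m,n)) i j : (- A) i j = - A i j.
Proof. by rewrite mxE. Qed.
Lemma mxE_scale m n (a : R) (A : 'M[R]_(m,n)) i j : (a *: A) i j = a * A i j.
Proof. by rewrite mxE. Qed.

Lemma row_bound m k (A : 'M[R]_(m, k)) (w : 'cV[R]_k) (r : R) i :
  (forall j, `|w j 0| <= r) -> `|(A *m w) i 0| <= r * \sum_j `|A i j|.
Proof.
move=> hw; rewrite mxE mulr_sumr.
apply: le_trans (ler_norm_sum _ _ _) _.
apply: ler_sum => j _; rewrite normrM mulrC ler_wpM2r //.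
Qed.

Lemma row_sum_le m k (A : 'M[R]_(m, k)) i :
  \sum_j `|A i j| <= \sum_i' \sum_j `|A i' j|.
Proof.
rewrite (bigD1 i) //= lerDl; apply: sumr_ge0 => i' _; apply: sumr_ge0 => j _.
exact: normr_ge0.
Qed.

End Aux.

Section P2.
Variable R : realType.

Lemma part2 d (g g0 : 'M[R]_d) : inSLR g -> in_orbit_closure g0 g -> isGL g0 -> isGL g.
Proof.
move=> hg hc hGL v; apply: small_isL => e he.
have [Dg hDg] : {f : nat -> 'M[R]_d * 'M[R]_d & forall k, inA (f k).1 /\ inSLZ (f k).2 /\
    forall i j, `|((f k).1 *m g *m (f k).2) i j - g0 i j| < (k.+1%:R)^-1}.
  apply: (@choice _ _ (fun k (p : 'M[R]_d * 'M[R]_d) => inA p.1 /\ inSLZ p.2 /\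
    forall i j, `|(p.1 *m g *m p.2) i j - g0 i j| < (k.+1%:R)^-1)) => k.
  have hp : 0 < (k.+1%:R : R)^-1 by rewrite invr_gt0 ltr0n.
  have [D [gam [h1 [h2 h3]]]] := hc _ hp.
  by exists (D, gam).
pose D k := (Dg k).1.
pose gam k := (Dg k).2.
pose M k := D k *m g *m gam k.
have hM : forall k, M k \in unitmx.
  move=> k; rewrite unitmxE !det_mulmx.
  have [[_ [_ ->]] [[_ ->] _]] := hDg k.
  by rewrite hg !mul1r unitr1.
pose t k := invmx (M k) *m (D k *m v).
pose fl k : 'cV[R]_d := \col_i ((Num.floor (t k i 0))%:~R).
pose tp k := t k - fl k.
have htp : forall k i, 0 <= tp k i 0 < 1.
  move=> k i; rewrite /tp mxE_add mxE_opp [fl k i 0]mxE.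
  have /andP[h1 h2] := floor_itv (t k i 0).
  rewrite intrD in h2; apply/andP; split; lra.
have htp' : forall k i, 0 <= (fun k => (tp k)^T) k 0 i <= 1.
  by move=> k i /=; rewrite mxE; have /andP[a b] := htp k i; rewrite a ltW.
have [ts hts] := seq_cluster htp'.
pose tstar : 'cV[R]_d := ts^T.
pose v0 := g0 *m tstar.
have he2 : 0 < e / 2 by rewrite divr_gt0.
have [n [n0 [u0 [hu0 lt0]]]] := isL_small (hGL v0) he2.
pose N := `|n%:~R : R|.
have hN : 1 <= N by apply: norm_int_ge1.
have hN0 : 0 < N by lra.
pose xs := g0 *m u0 + n%:~R *: v0.
have hdl : 0 < e / 2 / N by rewrite divr_gt0.
have [eta heta hcont] := Nw_cont xs hdl.
pose C1 := \sum_j (`|u0 j 0| + N).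
pose C2 := \sum_i \sum_j `|g0 i j|.
have hC1 : 0 <= C1 by apply: sumr_ge0 => j _; apply: addr_ge0 => //; lra.
have hC2 : 0 <= C2 by apply: sumr_ge0 => i _; apply: sumr_ge0 => j _.
pose r := eta / 2 / (N * (C2 + 1)).
have hr : 0 < r by rewrite divr_gt0 ?divr_gt0 ?mulr_gt0 //; lra.
pose K := Num.trunc (C1 * 2 / eta).
have [k [hKk hclose]] := hts r hr K.
have hcl : forall j, `|tp k j 0 - tstar j 0| < r.
  by move=> j; have := hclose j; rewrite !mxE.
pose s := u0 + n%:~R *: tp k.
pose w := n%:~R *: (tp k - tstar).
have exs : xs = g0 *m s - g0 *m w.
  rewrite -mulmxBr /xs /v0 scalemxAr -mulmxDr; congr (_ *m _).
  by rewrite /s /w [n%:~R *: (tp k - tstar)]scalerBr opprB -addrA; congr (_ + _); rewrite addrC subrK.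
have hs : \sum_j `|s j 0| <= C1.
  apply: ler_sum => j _; rewrite /s mxE_add mxE_scale.
  apply: le_trans (ler_normD _ _) _; rewrite lerD2l normrM -/N.
  rewrite -[leRHS]mulr1; apply: ler_wpM2l; first lra.
  by have /andP[a b] := htp k j; rewrite ger0_norm // ltW.
have b1 : forall i, `|(M k *m s) i 0 - (g0 *m s) i 0| < eta / 2.
  move=> i; have [_ [_ hcl']] := hDg k.
  apply: le_lt_trans (mul_close s hcl' i) _.
  apply: (@le_lt_trans _ _ ((K.+1%:R)^-1 * C1)).
    apply: ler_pM => //; first by apply: sumr_ge0 => j _; apply: normr_ge0.
    by rewrite lef_pV2 ?posrE ?ltr0n // ler_nat.
  rewrite mulrC ltr_pdivrMr ?ltr0n //.
  have := truncnS_gt (C1 * 2 / eta).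
  rewrite -/K => hK.
  have : C1 * 2 < K.+1%:R * eta by rewrite -ltr_pdivrMr // mulrC.
  lra.
have b2 : forall i, `|(g0 *m w) i 0| <= eta / 2.
  move=> i; have hw : forall j, `|w j 0| <= N * r.
    move=> j; rewrite /w mxE_scale normrM -/N; apply: ler_wpM2l; first lra.
    by rewrite mxE_add mxE_opp; apply: ltW.
  apply: le_trans (row_bound g0 i hw) _.
  apply: (@le_trans _ _ (N * r * C2)).
    by apply: ler_wpM2l; [apply: mulr_ge0; lra | apply: row_sum_le].
  have -> : N * r * C2 = eta / 2 * (C2 / (C2 + 1)).
    rewrite /r; field; apply/andP; split; apply/negP => /eqP h; lra.
  rewrite -[leRHS]mulr1; apply: ler_wpM2l; first lra.
  rewrite ler_pdivrMr; lra.
have hy : forall i, `|(M k *m s) i 0 - xs i 0| < eta.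
  move=> i; rewrite exs mxE_add mxE_opp.
  have -> : (M k *m s) i 0 - ((g0 *m s) i 0 - (g0 *m w) i 0) =
     ((M k *m s) i 0 - (g0 *m s) i 0) + (g0 *m w) i 0 by ring.
  apply: le_lt_trans (ler_normD _ _) _.
  have := b1 i; have := b2 i; lra.
pose u2 := gam k *m (u0 - n%:~R *: fl k).
have es : s = (u0 - n%:~R *: fl k) + n%:~R *: t k.
  rewrite /s /tp [n%:~R *: (t k - fl k)]scalerBr.
  by rewrite addrCA addrC.
have hMs : M k *m s = D k *m (g *m u2 + n%:~R *: v).
  rewrite es [LHS]mulmxDr -[M k *m (_ *: _)]scalemxAr.
  rewrite /t mulmxA mulmxV // mul1mx.
  by rewrite [RHS]mulmxDr -[D k *m (_ *: _)]scalemxAr /u2 /M !mulmxA.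
have hu2 : intvec u2.
  apply: intvec_mul; first by have [_ [[h _] _]] := hDg k.
  apply: intvecD => //; apply: intvecN; apply: intvecZ => i; rewrite mxE; exact: is_int_z.
exists n; split => //; exists u2; split => //.
have hNw : Nw (M k *m s) = Nw (g *m u2 + n%:~R *: v).
  by rewrite hMs NwD //; have [h _] := hDg k.
have := hcont _ hy; rewrite hNw => hc2.
rewrite normrM -/N.
set A := Nw (g *m u2 + n%:~R *: v) in hc2 *.
have hB : N * `|Nw xs| < e / 2 by rewrite -normrM.
have := ler_normD (A - Nw xs) (Nw xs); rewrite subrK => hA.
have : N * `|A| <= N * `|A - Nw xs| + N * `|Nw xs|.
  by rewrite -mulrDr; apply: ler_wpM2l => //; lra.
have : N * `|A - Nw xs| < e / 2.
  by rewrite -ltr_pdivlMl // mulrC.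
lra.
Qed.
End P2.

Unset Implicit Arguments.

Theorem proposition2p1 (R : realType) (d : nat) (hd : (2 <= d)%N) :
  (forall (g g0 : 'M[R]_d) (v v0 : 'cV[R]_d),
      inSLR g -> inSLR g0 ->
      in_orbit_closure (tau g0 v0) (tau g v) ->
      isL g0 v0 -> isL g v)
  /\
  (forall (g g0 : 'M[R]_d),
      inSLR g -> inSLR g0 ->
      in_orbit_closure g0 g ->
      isGL g0 -> isGL g).
Proof.
split.
- move=> g g0 v v0 _ _ hc hL; exact: (part1 hc hL).
- move=> g g0 hg _ hc hGL; exact: (part2 hg hc hGL).
Qed.
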